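(* Let $(G,J)$ be a non-abelian complex Lie group with Lie algebra $(\mathfrak g,\mu)$. If $(G,J)$ admits a left-invariant static metric, then $\mu(\mathfrak g,\mathfrak g)=\mathfrak g$. In particular, if $G$ is (non-abelian and) solvable, it admits no left-invariant static metric.
   Context: A complex Lie group $(G,J)$ is a real Lie group with bi-invariant complex structure $J$; $\mathfrak g^{1,0}=\{X\in\mathfrak g\otimes\mathbb C:JX=iX\}$. For a left-invariant Hermitian metric $g$ the torsion-twisted Chern–Ricci tensor is given, for a left-invariant holomorphic frame $Z_1,\dots,Z_n$ of $\mathfrak g^{1,0}$, by $\Theta(g)(Z_i,\bar Z_j)=\tfrac12 g^{k\bar l}g^{r\bar s}\,g(Z_i,\mu(\bar Z_l,\bar Z_s))\,g(\mu(Z_k,Z_r),\bar Z_j)$ (summation convention, $g$ extended complex-bilinearly). A Hermitian metric $g$ is static (for the positive Hermitian curvature flow) if $\Theta(g)=\lambda g$ for some $\lambda\in\mathbb R$. *)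

(* Defs.v *)
From HB Require Import structures.
From mathcomp Require Import all_boot all_order all_algebra.
From mathcomp Require Import complex.
Set Implicit Arguments. Unset Strict Implicit. Unset Printing Implicit Defensive.
Import Order.TTheory GRing.Theory Num.Theory.
Local Open Scope ring_scope.

(* The holomorphic part g^{1,0} of the Lie algebra of a complex Lie group (G,J)
   of complex dimension n is modelled as C^n = 'rV[C]_n with a complex Lie
   bracket mu.  Z_i := the i-th standard basis vector is a left-invariant
   holomorphic frame; mu (Z k) (Z r) has coordinates c_{kr}^m, and
   mu(Zbar_l, Zbar_s) = conj(c_{ls}^m) Zbar_m. *)

Section LieDefs.
Variables (C : numClosedFieldType) (n : nat).

Definition frame (i : 'I_n) : 'rV[C]_n := delta_mx 0 i.

Definition is_lie_bracket (mu : 'rV[C]_n -> 'rV[C]_n -> 'rV[C]_n) : Prop :=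
  [/\ (forall (a : C) x y z, mu (a *: x + y) z = a *: mu x z + mu y z),
      (forall (a : C) x y z, mu x (a *: y + z) = a *: mu x y + mu x z),
      (forall x, mu x x = 0) &
      (forall x y z, mu x (mu y z) + mu y (mu z x) + mu z (mu x y) = 0)].

Definition abelian_bracket (mu : 'rV[C]_n -> 'rV[C]_n -> 'rV[C]_n) : Prop :=
  forall x y, mu x y = 0.

(* A left-invariant Hermitian metric g, given by the matrix H i j = g(Z_i, Zbar_j). *)
Definition hermitian_metric (H : 'M[C]_n) : Prop :=
  (forall i j, H j i = (H i j)^*) /\
  (forall v : 'rV[C]_n, v != 0 -> 0 < (v *m H *m (map_mx Num.conj v)^T) 0 0).

(* g^{k lbar}, characterised by g^{k lbar} g_{m lbar} = delta_{km} *)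
Definition ginv (H : 'M[C]_n) (k l : 'I_n) : C := invmx H l k.

Definition sconst (mu : 'rV[C]_n -> 'rV[C]_n -> 'rV[C]_n) (k r m : 'I_n) : C :=
  mu (frame k) (frame r) 0 m.

(* Theta(g)(Z_i, Zbar_j) =
   1/2 g^{k lbar} g^{r sbar} g(Z_i, mu(Zbar_l, Zbar_s)) g(mu(Z_k, Z_r), Zbar_j) *)
Definition Theta (mu : 'rV[C]_n -> 'rV[C]_n -> 'rV[C]_n) (H : 'M[C]_n)
    (i j : 'I_n) : C :=
  2^-1 * \sum_(k < n) \sum_(l < n) \sum_(r < n) \sum_(s < n)
    (ginv H k l * ginv H r s
     * (\sum_(m < n) (sconst mu l s m)^* * H i m)
     * (\sum_(m < n) sconst mu k r m * H m j)).

Definition static_metric (mu : 'rV[C]_n -> 'rV[C]_n -> 'rV[C]_n) (H : 'M[C]_n) : Prop :=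
  hermitian_metric H /\
  exists2 lambda : C, lambda \is Num.real & forall i j, Theta mu H i j = lambda * H i j.

Definition derived_space (mu : 'rV[C]_n -> 'rV[C]_n -> 'rV[C]_n) : {vspace 'rV[C]_n} :=
  (\sum_(i < n) \sum_(j < n) <[mu (frame i) (frame j)]>)%VS.

Fixpoint derived_series (mu : 'rV[C]_n -> 'rV[C]_n -> 'rV[C]_n) (k : nat)
    : {vspace 'rV[C]_n} :=
  match k with
  | 0 => fullv
  | k.+1 => let V := derived_series mu k in
      (\sum_(i < \dim V) \sum_(j < \dim V)
         <[mu (tnth (vbasis V) i) (tnth (vbasis V) j)]>)%VS
  end.

Definition solvable_bracket (mu : 'rV[C]_n -> 'rV[C]_n -> 'rV[C]_n) : Prop :=
  exists k, derived_series mu k = 0%VS.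

End LieDefs.

(* Main.v *)
Set Warnings "-notation-overridden,-ambiguous-paths,-notation-incompatible-prefix".
Require Import Defs.
From HB Require Import structures.
From mathcomp Require Import all_boot all_order all_algebra.
From mathcomp Require Import complex.
From mathcomp Require Import sesquilinear spectral.
Set Implicit Arguments. Unset Strict Implicit. Unset Printing Implicit Defensive.
Import Order.TTheory GRing.Theory Num.Theory.
Local Open Scope ring_scope.
Local Open Scope sesquilinear_scope.

Section A.
Variables (C : numClosedFieldType) (n : nat).

Lemma herm_tc (H : 'M[C]_n) : (forall i j, H j i = (H i j)^*) -> H^t* = H.
Proof. by move=> hH; apply/matrixP=> i j; rewrite !mxE hH conjCK. Qed.

Lemma unitary_l (M : 'M[C]_n) : M \is unitarymx -> M^t* *m M = 1%:M.
Proof. by move=> uM; rewrite -invmx_unitary // mulVmx // unitarymx_unit. Qed.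

Lemma factorH (H : 'M[C]_n) : hermitian_metric H ->
  H \in unitmx /\ exists2 Q : 'M[C]_n, Q \in unitmx & invmx H = Q^t* *m Q.
Proof.
case=> hH pH.
have Ht := herm_tc hH.
have Hn : H \is normalmx by apply/normalmxP; rewrite Ht.
have /orthomx_spectralP HE := Hn.
set M := spectralmx H in HE; set d := spectral_diag H in HE.
have uM : M \is unitarymx by apply: spectral_unitarymx.
rewrite invmx_unitary // in HE.
have dpos : forall i, 0 < d 0 i.
  move=> i; have v0 : (delta_mx 0 i : 'rV[C]_n) *m M != 0.
    apply/negP=> /eqP /(congr1 (mulmx^~ (M ^t*))); rewrite -mulmxA (unitarymxP uM) mulmx1 mul0mx.
    move/matrixP/(_ 0 i); rewrite !mxE !eqxx /=.
    by move/eqP; rewrite oner_eq0.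
  have := pH _ v0.
  rewrite HE map_mxM trmx_mul map_trmx map_delta_mx !mulmxA !mulmxtVK //.
  by rewrite -rowE row_diag_mx -scalemxAl trmx_delta mul_delta_mx !mxE !eqxx mulr1.
pose t := \row_j sqrtC ((d 0 j)^-1).
pose Q := diag_mx t *m M.
have key : H *m (Q^t* *m Q) = 1%:M.
  rewrite HE /Q trmx_mul map_mxM tr_diag_mx map_diag_mx !mulmxA mulmxtVK //.
  rewrite -!mulmxA (mulmxA (diag_mx _) (diag_mx t)) mulmx_diag (mulmxA (diag_mx d)) mulmx_diag.
  set r := \row_j _.
  have -> : r = const_mx 1.
    apply/rowP=> j; rewrite !mxE.
    change (d 0 j * ((sqrtC (d 0 j)^-1)^* * sqrtC (d 0 j)^-1) = 1).
    have tg : 0 <= sqrtC (d 0 j)^-1 by rewrite sqrtC_ge0 invr_ge0 ltW.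
    rewrite geC0_conj // -expr2 sqrtCK mulfV //.
    by apply: lt0r_neq0.
  by rewrite diag_const_mx mul_scalar_mx scale1r unitary_l.
have [uH uQQ] := mulmx1_unit key.
split => //; exists Q.
  by move: uQQ; rewrite unitmx_mul => /andP[].
by rewrite -[RHS]mul1mx -(mulVmx uH) -mulmxA key mulmx1.
Qed.

Lemma trace_form (P : 'M[C]_n) (f : 'I_n -> 'I_n -> C) :
  \sum_(k < n) \sum_(l < n) \sum_(r < n) \sum_(s < n)
    (P l k * P s r * (f l s)^* * f k r) =
  \tr (P^T *m (map_mx Num.conj (\matrix_(k, r) f k r) *m P *m (\matrix_(k, r) f k r)^T)).
Proof.
  rewrite /mxtrace; apply: eq_bigr => k _; rewrite mxE; apply: eq_bigr => l _.
  rewrite !mxE mulr_sumr; apply: eq_bigr => r _.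
  rewrite !mxE mulr_suml mulr_sumr; apply: eq_bigr => s _.
  by rewrite !mxE [(f l s)^* * _]mulrC !mulrA.
Qed.

Lemma formB (Q : 'M[C]_n) (f : 'I_n -> 'I_n -> C) : Q \in unitmx ->
  \sum_(k < n) \sum_(l < n) \sum_(r < n) \sum_(s < n)
    ((Q^t* *m Q) l k * (Q^t* *m Q) s r * (f l s)^* * f k r) = 0 ->
  forall k r, f k r = 0.
Proof.
move=> uQ; set P := Q^t* *m Q.
have E1 := trace_form P f.
set A := \matrix_(k, r) f k r in E1.
set B := Q *m A *m Q^T.
have E2 : \tr (P^T *m (map_mx Num.conj A *m P *m A^T)) = \tr (map_mx Num.conj B *m B^T).
  rewrite /P /B trmx_mul -map_trmx trmxK !map_mxM !trmx_mul trmxK !mulmxA [in RHS]mxtrace_mulC !mulmxA.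
  rewrite map_trmx. reflexivity.
have E3 : \tr (map_mx Num.conj B *m B^T) = \sum_(i < n) \sum_(j < n) (B i j)^* * B i j.
  by apply: eq_bigr => i _; rewrite mxE; apply: eq_bigr => j _; rewrite !mxE.
rewrite E1 E2 E3 => H0.
have B0 : B = 0.
  apply/matrixP => i j; rewrite [RHS]mxE.
  have nn : forall x : C, 0 <= x^* * x by move=> x; rewrite mulrC -normCK exprn_ge0.
  have Hi := psumr_eq0P (fun i _ => sumr_ge0 _ (fun j _ => nn (B i j))) H0 (i:=i) isT.
  have := psumr_eq0P (fun j _ => nn (B i j)) Hi (i:=j) isT.
  by move/eqP; rewrite mulf_eq0 conjC_eq0 orbb => /eqP.
have uQT : Q^T \in unitmx by rewrite unitmx_tr.
have A0 : A = 0.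
  move: B0; rewrite /B => /(congr1 (fun X => invmx Q *m X *m invmx Q^T)).
  by rewrite !mulmxA mulmxK // mulVmx // mul1mx mulmx0 mul0mx.
by move=> k r; have := congr1 (fun M : 'M[C]_n => M k r) A0; rewrite !mxE.
Qed.

Section Bil.
Variable mu : 'rV[C]_n -> 'rV[C]_n -> 'rV[C]_n.
Hypothesis Lie : is_lie_bracket mu.

Lemma mu0l z : mu 0 z = 0.
Proof.
case: Lie => h1 _ _ _.
have := h1 1 0 0 z; rewrite !scale1r addr0 => e.
by have := congr1 (fun t => t - mu 0 z) e; rewrite subrr addrK.
Qed.

Lemma mu0r z : mu z 0 = 0.
Proof.
case: Lie => _ h1 _ _.
have := h1 1 z 0 0; rewrite !scale1r addr0 => e.
by have := congr1 (fun t => t - mu z 0) e; rewrite subrr addrK.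
Qed.

Lemma mu_suml (I : finType) (a : I -> C) (x : I -> 'rV[C]_n) z :
  mu (\sum_i a i *: x i) z = \sum_i a i *: mu (x i) z.
Proof.
case: Lie => h1 _ _ _.
apply: (big_ind2 (fun u v => mu u z = v)).
- exact: mu0l.
- by move=> u1 v1 u2 v2 e1 e2; have := h1 1 u1 u2 z; rewrite !scale1r e1 e2.
- by move=> i _; have := h1 (a i) (x i) 0 z; rewrite addr0 mu0l addr0.
Qed.

Lemma mu_sumr (I : finType) (a : I -> C) (x : I -> 'rV[C]_n) z :
  mu z (\sum_i a i *: x i) = \sum_i a i *: mu z (x i).
Proof.
case: Lie => _ h1 _ _.
apply: (big_ind2 (fun u v => mu z u = v)).
- exact: mu0r.
- by move=> u1 v1 u2 v2 e1 e2; have := h1 1 z u1 u2; rewrite !scale1r e1 e2.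
- by move=> i _; have := h1 (a i) z (x i) 0; rewrite addr0 mu0r addr0.
Qed.

Lemma mu_expand x y :
  mu x y = \sum_i \sum_j (x 0 i * y 0 j) *: mu (frame C i) (frame C j).
Proof.
rewrite {1}(row_sum_delta x) mu_suml; apply: eq_bigr => i _.
rewrite {1}(row_sum_delta y) mu_sumr scaler_sumr; apply: eq_bigr => j _.
by rewrite scalerA mulrC.
Qed.

Lemma abelian_of_frames :
  (forall i j, mu (frame C i) (frame C j) = 0) -> abelian_bracket mu.
Proof.
move=> h x y; rewrite mu_expand big1 // => i _; rewrite big1 // => j _.
by rewrite h scaler0.
Qed.
End Bil.

Lemma exists_annih (V : {vspace 'rV[C]_n}) : V != fullv ->
  exists2 w : 'cV[C]_n, w != 0 & forall u, u \in V -> u *m w = 0.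
Proof.
move=> hV.
have dV : (\dim V < n)%N.
  rewrite ltnNge; apply: contra hV => h.
  by rewrite eqEdim subvf dimvf dim_matrix mul1r.
pose Y : 'M[C]_(\dim V, n) := \matrix_(i, j) (vbasis V)`_i 0 j.
pose K := kermx Y^T.
have rK : (0 < \rank K)%N.
  rewrite mxrank_ker mxrank_tr subn_gt0.
  exact: leq_ltn_trans (rank_leq_row Y) dV.
have [r Kr] : exists r, row r K != 0.
  apply/existsP; rewrite -negb_forall; apply: contraL rK => /forallP h.
  suff -> : K = 0 by rewrite mxrank0.
  by apply/row_matrixP => r; rewrite row0; apply/eqP; exact: h.
exists (row r K)^T; first by rewrite trmx_eq0.
move=> u uV; rewrite (coord_vbasis uV) mulmx_suml big1 // => i _.
have -> : (vbasis V)`_i = row i Y by apply/rowP => j; rewrite !mxE.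
rewrite -scalemxAl -row_mul; apply/eqP; rewrite scaler_eq0; apply/orP; right.
have : row r K *m Y^T = 0 by rewrite -row_mul mulmx_ker row0.
by move/(congr1 trmx); rewrite trmx_mul trmxK trmx0 => ->; rewrite row0.
Qed.

Lemma entry_helper (c : C) (u v : 'rV[C]_n) i j :
  (c *: (u^t* *m v)) i j = c * ((u 0 i)^* * v 0 j).
Proof. by rewrite !mxE big_ord1 !mxE. Qed.

Lemma derived_full (mu : 'rV[C]_n -> 'rV[C]_n -> 'rV[C]_n) : is_lie_bracket mu ->
  derived_space mu = fullv -> forall k, derived_series mu k = fullv.
Proof.
move=> Lie hd; elim=> [//|k IH] /=; rewrite IH.
apply/eqP; rewrite eqEsubv subvf /= -{1}hd.
apply/subv_sumP => i _; apply/subv_sumP => j _; rewrite -memvE.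
set b := vbasis fullv.
have ex : forall x, x = \sum_(a < \dim (fullv : {vspace 'rV[C]_n})) coord b a x *: tnth b a.
  by move=> x; rewrite {1}(coord_vbasis (memvf x)); apply: eq_bigr => a _; rewrite (tnth_nth 0).
rewrite (ex (frame C i)) (ex (frame C j)) mu_suml //.
apply: memv_suml => a _; apply: memvZ; rewrite mu_sumr //.
apply: memv_suml => c _; apply: memvZ.
rewrite memvE; apply: (sumv_sup a) => //; apply: (sumv_sup c) => //.
Qed.

Lemma part1 (mu : 'rV[C]_n -> 'rV[C]_n -> 'rV[C]_n) (H : 'M[C]_n) :
  is_lie_bracket mu -> ~ abelian_bracket mu -> static_metric mu H ->
  derived_space mu = fullv.
Proof.
move=> Lie nab [hm [lam _ hT]].
have [uH [Q uQ PE]] := factorH hm.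
case: hm => hH _.
pose b k r := mu (frame C k) (frame C r) *m H.
have ThE : forall i j, Theta mu H i j = 2^-1 * \sum_(k < n) \sum_(l < n) \sum_(r < n) \sum_(s < n)
   ((Q^t* *m Q) l k * (Q^t* *m Q) s r * (b l s 0 i)^* * b k r 0 j).
  move=> i j; rewrite /Theta; congr (_ * _).
  apply: eq_bigr => k _; apply: eq_bigr => l _; apply: eq_bigr => r _; apply: eq_bigr => s _.
  rewrite /ginv -PE; congr (_ * _ * _ * _).
    by rewrite /b mxE rmorph_sum; apply: eq_bigr => m _; rewrite rmorphM [H i m]hH.
  by rewrite /b mxE.
have gen : forall k r, mu (frame C k) (frame C r) \in derived_space mu.
  move=> k r; rewrite memvE /derived_space.
  by apply: (sumv_sup k) => //; apply: (sumv_sup r) => //; rewrite -memvE memv_line.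
have lam0 : derived_space mu != fullv -> lam = 0.
  move=> hne; have [w w0 hw] := exists_annih hne.
  pose y := invmx H *m w.
  have TM : \matrix_(i, j) Theta mu H i j = 2^-1 *: \sum_(k < n) \sum_(l < n) \sum_(r < n) \sum_(s < n)
     (((Q^t* *m Q) l k * (Q^t* *m Q) s r) *: ((b l s)^t* *m b k r)).
    apply/matrixP => i j; rewrite mxE ThE [RHS]mxE summxE; congr (_ * _).
    apply: eq_bigr => k _; rewrite summxE; apply: eq_bigr => l _; rewrite summxE.
    apply: eq_bigr => r _; rewrite summxE; apply: eq_bigr => s _.
    rewrite entry_helper.
    by rewrite -!mulrA.
  have Z : (\matrix_(i, j) Theta mu H i j) *m y = 0.
    rewrite TM -scalemxAl; apply/eqP; rewrite scaler_eq0; apply/orP; right; apply/eqP.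
    rewrite mulmx_suml big1 // => k _; rewrite mulmx_suml big1 // => l _.
    rewrite mulmx_suml big1 // => r _; rewrite mulmx_suml big1 // => s _.
    rewrite -scalemxAl -mulmxA /b /y -(mulmxA _ H) (mulmxA H) mulmxV // mul1mx.
    by rewrite hw ?gen // mulmx0 scaler0.
  have L : \matrix_(i, j) Theta mu H i j = lam *: H by apply/matrixP => i j; rewrite !mxE hT.
  rewrite L -scalemxAl /y mulmxA mulmxV // mul1mx in Z.
  by move/eqP: Z; rewrite scaler_eq0 (negbTE w0) orbF => /eqP.
case: (eqVneq (derived_space mu) fullv) => // hne.
exfalso; apply: nab; apply: (abelian_of_frames Lie) => k r.
have bz : forall j, b k r 0 j = 0.
  move=> j; have := hT j j; rewrite lam0 // mul0r ThE => /eqP.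
  rewrite mulf_eq0 invr_eq0 pnatr_eq0 /= => /eqP S0.
  exact: (formB uQ S0).
have : b k r = 0 by apply/rowP => j; rewrite bz mxE.
by move/(congr1 (mulmx^~ (invmx H))); rewrite /b mulmxK // mul0mx.
Qed.

Lemma main_gen (mu : 'rV[C]_n -> 'rV[C]_n -> 'rV[C]_n) :
  is_lie_bracket mu -> ~ abelian_bracket mu ->
  (forall H : 'M[C]_n, static_metric mu H -> derived_space mu = fullv%VS) /\
  (solvable_bracket mu -> forall H : 'M[C]_n, ~ static_metric mu H).
Proof.
move=> Lie nab; split; first by move=> H; apply: part1.
move=> [k hk] H st.
have hd := part1 Lie nab st.
have := derived_full Lie hd k; rewrite hk => h0.
apply: nab => x y; apply/eqP; rewrite -memv0 h0 memvf //.
Qed.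
End A.

Local Close Scope sesquilinear_scope.

Theorem proposition2p5 (R : rcfType) (n : nat)
    (mu : 'rV[R[i]]_n -> 'rV[R[i]]_n -> 'rV[R[i]]_n) :
  is_lie_bracket mu -> ~ abelian_bracket mu ->
  (forall H : 'M[R[i]]_n, static_metric mu H -> derived_space mu = fullv%VS) /\
  (solvable_bracket mu -> forall H : 'M[R[i]]_n, ~ static_metric mu H).
Proof. exact: main_gen. Qed.
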